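(* Let $\bm\mu=(\mu_1,\dots,\mu_r)$ be finite positive Borel measures on the unit circle with infinite supports, fix the square-root branch as in the context, let $\bm n\in\mathbb N^r$ be $\phi$-normal for $\bm\mu$ and $\tau\in\partial\mathbb D$. Let $X\not\equiv0$ be a $\tau$-invariant paraorthogonal function for $\bm n$ (see context). Suppose that for every $z_0\in\mathbb C$ with $z_0\neq0$ and $|z_0|\neq1$, the index $\bm n$ is also $\phi$-normal with respect to the system $(|z-z_0|^2d\mu_1(z),\dots,|z-z_0|^2d\mu_r(z))$. Then the polynomial $z^{(|\bm n|+1)/2}X(z)$ has degree $|\bm n|+1$ and all of its $|\bm n|+1$ zeros lie on the unit circle $\partial\mathbb D$.
   Context: $\partial\mathbb D=\{|z|=1\}$. Fix $t_0\in\mathbb R$ and let $z^{k/2}=|z|^{k/2}\exp(ik\arg_{[t_0,t_0+2\pi)}(z)/2)$, $k\in\mathbb Z$. $|\bm n|=\sum_j n_j$; $\operatorname{span}\{z^p\}_{p=a}^b$ ($b-a\in\mathbb Z$) is the span of $z^a,z^{a+1},\dots,z^b$. For a system $\bm\nu=(\nu_1,\dots,\nu_r)$ of measures on $\partial\mathbb D$, $\bm n$ is $\phi$-normal w.r.t. $\bm\nu$ if there is a unique $\phi\in\operatorname{span}\{z^p\}_{p=-|\bm n|/2}^{|\bm n|/2}$ with coefficient of $z^{|\bm n|/2}$ equal to $1$ such that $\int\phi(z)z^{-p}\,d\nu_j(z)=0$ for $p=-n_j/2,\dots,n_j/2-1$, $j=1,\dots,r$. A $\tau$-invariant paraorthogonal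 function for $\bm n$ is any $X\in\operatorname{span}\{z^p\}_{p=-(|\bm n|+1)/2}^{(|\bm n|+1)/2}$ with $X(z)=\tau\overline{X(1/\bar z)}$ and $\int X(z)z^{-p}\,d\mu_j(z)=0$ for $p=-(n_j-1)/2,\dots,(n_j-1)/2$, $j=1,\dots,r$. (For example, $z^{1/2}\phi_{\bm n}(z)+\tau z^{-1/2}\overline{\phi_{\bm n}(1/\bar z)}$.) Note $z^{(|\bm n|+1)/2}X(z)$ is a polynomial of degree at most $|\bm n|+1$; zeros of $X$ refer to zeros of this polynomial. *)

(* Defs.v *)
From HB Require Import structures.
From mathcomp Require Import all_boot all_order all_algebra.
From mathcomp Require Import all_classical all_reals all_analysis.
From mathcomp Require Import complex.

Set Implicit Arguments.
Unset Strict Implicit.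
Unset Printing Implicit Defensive.
Import Order.TTheory GRing.Theory Num.Theory.
Import numFieldNormedType.Exports.

Local Open Scope classical_set_scope.
Local Open Scope ring_scope.
Local Open Scope complex_scope.

Section Defs.
Variable R : realType.
Local Notation C := R[i].

Definition expi (t : R) : C := cos t +i* sin t.

(* arg_{[t0, t0+2pi)}(z): the unique angle in [t0, t0+2pi) with
   z = |z| e^{i arg z}  (for z <> 0; for z = 0 an arbitrary value). *)
Definition argc (t0 : R) (z : C) : R :=
  xget t0 [set t : R | t0 <= t < t0 + 2 * pi /\ z = (Normc.normc z)%:C * expi t].

Definition hpow (t0 : R) (k : int) (z : C) : C :=
  ((Num.sqrt (Normc.normc z)) ^ k)%:C * expi (k%:~R * argc t0 z / 2).

(* the element  sum_{j=0}^{N} c_j z^{(2j - N)/2}  of span{z^p}_{p=-N/2}^{N/2};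
   c is the coefficient polynomial (of size <= N+1), so c`_N is the
   coefficient of z^{N/2}. *)
Definition lfun (t0 : R) (N : nat) (c : {poly C}) (z : C) : C :=
  \sum_(j < N.+1) c`_j * hpow t0 (2 * (j : nat)%:Z - N%:Z) z.

(* integral over the circle of f (a function on C) with respect to the
   measure  w d(mu) , where mu is a measure on the angle variable
   theta in [t0, t0+2pi) and z = e^{i theta}; complex integral = integral of
   real part + i * integral of imaginary part. *)
Definition cint (mu : {measure set R -> \bar R}) (w : R -> R) (f : C -> C) : C :=
  (Rintegral mu setT (fun t => w t * complex.Re (f (expi t))))
  +i* (Rintegral mu setT (fun t => w t * complex.Im (f (expi t)))).

Definition nsum (r : nat) (n : 'I_r -> nat) : nat := (\sum_(j < r) n j)%N.

Definition phi_normal (t0 : R) (r : nat) (mu : 'I_r -> {measure set R -> \bar R})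
    (w : R -> R) (n : 'I_r -> nat) : Prop :=
  let N := nsum n in
  exists! c : {poly C},
    [/\ (size c <= N.+1)%N, c`_N = 1 &
      forall (j : 'I_r) (k : nat), (k < n j)%N ->
        (* p = -n_j/2 + k, z^{-p} = z^{(n_j - 2k)/2} *)
        cint (mu j) w (fun z => lfun t0 N c z * hpow t0 ((n j)%:Z - 2 * k%:Z) z) = 0].

(* X = lfun t0 (|n|+1) d is a tau-invariant paraorthogonal function for n *)
Definition paraorthogonal (t0 : R) (r : nat) (mu : 'I_r -> {measure set R -> \bar R})
    (n : 'I_r -> nat) (tau : C) (d : {poly C}) : Prop :=
  let N := nsum n in
  [/\ (size d <= N.+2)%N,
      (forall z : C, z != 0 ->
         lfun t0 N.+1 d z = tau * (lfun t0 N.+1 d (conjc z)^-1)^*) &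
      forall (j : 'I_r) (k : nat), (k < n j)%N ->
        (* p = -(n_j - 1)/2 + k, z^{-p} = z^{(n_j - 1 - 2k)/2} *)
        cint (mu j) (fun _ => 1)
          (fun z => lfun t0 N.+1 d z * hpow t0 ((n j)%:Z - 1 - 2 * k%:Z) z) = 0].

Definition msupport (mu : {measure set R -> \bar R}) : set R :=
  [set t | forall e : R, 0 < e -> (0 < mu (ball t e))%E].

End Defs.

(* Main.v *)
Require Import Defs.
From HB Require Import structures.
From mathcomp Require Import all_boot all_order all_algebra.
From mathcomp Require Import all_classical all_reals all_analysis.
From mathcomp Require Import complex.
From mathcomp Require Import ring lra.
From mathcomp Require Import measurable_realfun.
From mathcomp Require Import zify.
Import Order.TTheory GRing.Theory Num.Theory.
Import numFieldNormedType.Exports.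
Local Open Scope classical_set_scope.
Local Open Scope ring_scope.
Section S.
Variable R : realType.
Local Open Scope complex_scope.
Implicit Types x y : R.
Lemma expiD x y : expi x * expi y = expi (x + y) :> R[i].
Proof.
rewrite /expi cosD sinD; apply/eqP; rewrite eq_complex /=; apply/andP; split; apply/eqP; ring.
Qed.
Lemma expi0 : expi 0 = 1 :> R[i].
Proof. by rewrite /expi cos0 sin0. Qed.
Lemma conj_expi x : conjc (expi x) = expi (- x) :> R[i].
Proof. by rewrite /expi cosN sinN. Qed.
Lemma normc_expi x : Normc.normc (expi x) = 1.
Proof. by rewrite /Normc.normc /expi /= cos2Dsin2 sqrtr1. Qed.
Lemma bnd (f : R -> R) M : (forall t, `|f t| <= M) -> [bounded f t | t in setT].
Proof.
move=> H; exists M; split => //= y My t _; exact: (le_trans (H t) (ltW My)).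
Qed.
Lemma expi_2pi x : expi (x + 2 * pi) = expi x :> R[i].
Proof. by rewrite /expi mulr_natl cosD2pi sinD2pi. Qed.
Lemma expi_2pin x (k : nat) : expi (x + 2 * pi * k%:R) = expi x :> R[i].
Proof.
elim: k => [|k IH]; first by rewrite mulr0 addr0.
have -> : (k.+1)%:R = k%:R + 1 :> R by rewrite natr1.
by rewrite [X in x + X]mulrDr mulr1 addrA expi_2pi.
Qed.
Lemma expi_2piz x (k : int) : expi (x + 2 * pi * k%:~R) = expi x :> R[i].
Proof.
case: k => k; first by rewrite expi_2pin.
rewrite NegzE mulrNz mulrN -[in RHS](subrK (2 * pi * (k.+1)%:R) x).
by rewrite expi_2pin.
Qed.
Variable t0 : R.
Definition per x := x - 2 * pi * (Num.floor ((x - t0) / (2 * pi)))%:~R.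
Lemma pi2_gt0 : 0 < 2 * pi :> R.
Proof. by rewrite mulr_gt0 ?pi_gt0. Qed.
Lemma per_itv x : t0 <= per x < t0 + 2 * pi.
Proof.
rewrite /per; have p := pi2_gt0; move: p; set P := 2 * pi => p.
set q := (x - t0) / P.
have hq : x - t0 = P * q by rewrite /q mulrC divfK // gt_eqF.
have := floor_itv q; rewrite intrD (_ : (1%:~R : R) = 1) // => /andP[h1 h2].
set f := (Num.floor q)%:~R in h1 h2 *.
have e1 : P * f <= P * q by rewrite ler_pM2l.
have e2 : P * q < P * f + P by rewrite -[X in _ + X]mulr1 -mulrDr ltr_pM2l.
apply/andP; split; lra.
Qed.
Lemma expi_per x : expi (per x) = expi x :> R[i].
Proof. by rewrite /per -mulrN -mulrNz expi_2piz. Qed.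
Lemma sin_eq0_pi x : - pi < x < pi -> sin x = 0 -> x = 0.
Proof.
move=> /andP[h1 h2] s0; case: (ltgtP x 0) => // hx.
- have : 0 < sin (- x) by apply: sin_gt0_pi; apply/andP; split; lra.
  by rewrite sinN s0 oppr0 ltxx.
- have : 0 < sin x by apply: sin_gt0_pi; apply/andP; split; lra.
  by rewrite s0 ltxx.
Qed.
Lemma angle_uniq a b : t0 <= a < t0 + 2 * pi -> t0 <= b < t0 + 2 * pi ->
  expi a = expi b :> R[i] -> a = b.
Proof.
move=> /andP[a1 a2] /andP[b1 b2] [ec es].
set p := (a + b) / 2; set x := (a - b) / 2.
have ha : a = p + x by rewrite /p /x; field.
have hb : b = p + - x by rewrite /p /x; field.
rewrite ha hb !cosD !sinD cosN sinN in ec es.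
have e1 : sin x * sin p = 0 by lra.
have e2 : sin x * cos p = 0 by lra.
have : sin x ^+ 2 = 0.
  have := cos2Dsin2 p; move=> h.
  by rewrite -[LHS]mulr1 -h; nra.
move/eqP; rewrite sqrf_eq0 => /eqP s0.
have : x = 0 by apply: sin_eq0_pi => //; apply/andP; split; rewrite /x; lra.
rewrite /x => h; have : a - b = 0 by rewrite -(mulr0 2) -h; field.
by move/eqP; rewrite subr_eq0 => /eqP.
Qed.
Lemma argc_expi x : argc t0 (expi x) = per x.
Proof.
apply: xget_unique.
  by split; [exact: per_itv | rewrite normc_expi mul1r expi_per].
move=> y [hy]; rewrite normc_expi mul1r -(expi_per x) => e.
by apply: angle_uniq => //; exact: per_itv.
Qed.
Definition Ek (t : R) (k : int) : R[i] := expi (k%:~R * (per t / 2)).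
Lemma hpow_circ k t : hpow t0 k (expi t) = Ek t k.
Proof.
rewrite /hpow /Ek normc_expi sqrtr1 exp1rz argc_expi rmorph1 mul1r.
by rewrite mulrA.
Qed.
Lemma EkD t k l : Ek t k * Ek t l = Ek t (k + l).
Proof. by rewrite /Ek expiD -mulrDl -intrD. Qed.
Lemma Ek0 t : Ek t 0 = 1.
Proof. by rewrite /Ek mul0r expi0. Qed.
Lemma Ek2 t : Ek t 2 = expi t.
Proof.
by rewrite /Ek (_ : (2%:~R : R) = 2) // mulrC divfK ?expi_per // pnatr_eq0.
Qed.
Lemma Ek_conj t k : conjc (Ek t k) = Ek t (- k).
Proof. by rewrite /Ek conj_expi intrN mulNr. Qed.
Lemma Ek_nat t (j : nat) : Ek t (2 * j%:Z) = expi t ^+ j.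
Proof.
elim: j => [|j IH]; first by rewrite mulr0 Ek0.
have -> : (2 * (j.+1)%:Z) = 2 + 2 * j%:Z by rewrite intS mulrDr mulr1.
by rewrite -EkD Ek2 IH exprS.
Qed.
Lemma lfun_circ N (c : {poly R[i]}) t : (size c <= N.+1)%N ->
  lfun t0 N c (expi t) = Ek t (- N%:Z) * c.[expi t].
Proof.
move=> hs; rewrite /lfun (horner_coef_wide _ hs) mulr_sumr.
apply: eq_bigr => j _; rewrite hpow_circ -Ek_nat mulrCA EkD addrC.
by [].
Qed.
Definition rnice (f : R -> R) := measurable_fun setT f /\ exists M, forall t, `|f t| <= M.
Definition cnice (g : R -> R[i]) := rnice (fun t => complex.Re (g t)) /\ rnice (fun t => complex.Im (g t)).
Lemma rnice_cst (a : R) : rnice (fun=> a).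
Proof. by split; [exact: measurable_cst | exists `|a|]. Qed.
Lemma rnice_add f g : rnice f -> rnice g -> rnice (fun t => f t + g t).
Proof.
move=> [mf [M1 h1]] [mg [M2 h2]]; split; first exact: measurable_funD.
by exists (M1 + M2) => t; apply: (le_trans (ler_normD _ _)); apply: lerD.
Qed.
Lemma rnice_mul f g : rnice f -> rnice g -> rnice (fun t => f t * g t).
Proof.
move=> [mf [M1 h1]] [mg [M2 h2]]; split; first exact: measurable_funM.
by exists (M1 * M2) => t; rewrite normrM; apply: ler_pM.
Qed.
Lemma rnice_opp f : rnice f -> rnice (fun t => - f t).
Proof.
move=> [mf [M h]]; split; first exact: measurable_funN.
by exists M => t; rewrite normrN.
Qed.
Lemma cnice_cst (a : R[i]) : cnice (fun=> a).
Proof. by split; apply: rnice_cst. Qed.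
Lemma cnice_add f g : cnice f -> cnice g -> cnice (fun t => f t + g t).
Proof.
move=> [h1 h2] [h3 h4]; split.
- have -> : (fun t => complex.Re (f t + g t)) = (fun t => complex.Re (f t) + complex.Re (g t)).
    by apply: funext => t; case: (f t) => a b; case: (g t).
  exact: rnice_add.
- have -> : (fun t => complex.Im (f t + g t)) = (fun t => complex.Im (f t) + complex.Im (g t)).
    by apply: funext => t; case: (f t) => a b; case: (g t).
  exact: rnice_add.
Qed.
Lemma cnice_mul f g : cnice f -> cnice g -> cnice (fun t => f t * g t).
Proof.
move=> [h1 h2] [h3 h4]; split.
- have -> : (fun t => complex.Re (f t * g t)) =
    (fun t => complex.Re (f t) * complex.Re (g t) + - (complex.Im (f t) * complex.Im (g t))).
    by apply: funext => t; case: (f t) => a b; case: (g t).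
  by apply: rnice_add; [|apply: rnice_opp]; apply: rnice_mul.
- have -> : (fun t => complex.Im (f t * g t)) =
    (fun t => complex.Re (f t) * complex.Im (g t) + complex.Im (f t) * complex.Re (g t)).
    by apply: funext => t; case: (f t) => a b; case: (g t).
  by apply: rnice_add; apply: rnice_mul.
Qed.
Lemma cnice_sum (I : Type) (s : seq I) (P : pred I) (F : I -> R -> R[i]) :
  (forall i, cnice (F i)) -> cnice (fun t => \sum_(i <- s | P i) F i t).
Proof.
move=> h; elim: s => [|a s IH].
  by under eq_fun do rewrite big_nil; exact: cnice_cst.
under eq_fun do rewrite big_cons.
case: (P a) => //; exact: cnice_add.
Qed.
Lemma measurable_per : measurable_fun setT per.
Proof.
rewrite /per.
have mg : measurable_fun setT
    (fun x => (Num.floor ((x - t0) / (2 * pi)))%:~R : R).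
  apply: nondecreasing_measurable => // x y hxy.
  rewrite ler_int; apply: le_floor.
  by rewrite ler_pM2r ?invr_gt0 ?pi2_gt0 // lerD2r.
apply: measurable_funB; first exact: measurable_id.
by apply: measurable_funM => //; exact: measurable_cst.
Qed.
Lemma cnice_Ek k : cnice (fun t => Ek t k).
Proof.
have mk : measurable_fun setT (fun t => k%:~R * (per t / 2)).
  apply: measurable_funM; first exact: measurable_cst.
  apply: measurable_funM; [exact: measurable_per | exact: measurable_cst].
split; split.
- exact: measurableT_comp (continuous_measurable_fun (@continuous_cos R)) mk.
- by exists 1 => t; exact: cos_max.
- exact: measurableT_comp (continuous_measurable_fun (@continuous_sin R)) mk.
- by exists 1 => t; exact: sin_max.
Qed.
Lemma rnice_int (mu : {measure set R -> \bar R}) h : (mu setT < +oo)%E ->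
  rnice h -> mu.-integrable setT (EFin \o h).
Proof.
move=> fin [mh [M hM]]; apply: measurable_bounded_integrable => //.
exact: bnd hM.
Qed.
Lemma cintD (mu : {measure set R -> \bar R}) w (f g : R[i] -> R[i]) : (mu setT < +oo)%E ->
  rnice w -> cnice (f \o @expi R) -> cnice (g \o @expi R) ->
  cint mu w (fun z => f z + g z) = cint mu w f + cint mu w g.
Proof.
move=> fin hw [f1 f2] [g1 g2]; rewrite /cint.
have hR : (fun t => w t * complex.Re (f (expi t) + g (expi t))) =
  (fun t => w t * complex.Re (f (expi t)) + w t * complex.Re (g (expi t))).
  by apply: funext => t; case: (f (expi t)) => a b; case: (g (expi t)) => c d /=; rewrite mulrDr.
have hI : (fun t => w t * complex.Im (f (expi t) + g (expi t))) =
  (fun t => w t * complex.Im (f (expi t)) + w t * complex.Im (g (expi t))).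
  by apply: funext => t; case: (f (expi t)) => a b; case: (g (expi t)) => c d /=; rewrite mulrDr.
rewrite hR hI !RintegralD //; try by apply: rnice_int => //; apply: rnice_mul.
Qed.
Lemma cnice_lfun N (c : {poly R[i]}) m :
  cnice (fun t => lfun t0 N c (expi t) * hpow t0 m (expi t)).
Proof.
have -> : (fun t => lfun t0 N c (expi t) * hpow t0 m (expi t)) =
  (fun t => \sum_(j < N.+1) (c`_j * (Ek t (2 * (j : nat)%:Z - N%:Z) * Ek t m))).
  apply: funext => t; rewrite /lfun mulr_suml; apply: eq_bigr => j _.
  by rewrite !hpow_circ mulrA.
apply: cnice_sum => j; apply: cnice_mul; first exact: cnice_cst.
by apply: cnice_mul; apply: cnice_Ek.
Qed.
Lemma lfunD N (c e : {poly R[i]}) z : lfun t0 N (c + e) z = lfun t0 N c z + lfun t0 N e z.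
Proof. by rewrite /lfun -big_split; apply: eq_bigr => j _; rewrite coefD mulrDl. Qed.
Lemma kernel r (mu : 'I_r -> {measure set R -> \bar R}) w n :
  (forall j, (mu j setT < +oo)%E) -> rnice w -> phi_normal t0 mu w n ->
  forall Y : {poly R[i]}, (size Y <= nsum n)%N ->
  (forall j k, (k < n j)%N -> cint (mu j) w
     (fun z => lfun t0 (nsum n) Y z * hpow t0 ((n j)%:Z - 2 * k%:Z) z) = 0) ->
  Y = 0.
Proof.
move=> fin hw [c [[c1 c2 c3] cu]] Y hY hc.
have : c = c + Y.
  apply: cu; split.
  - by rewrite (leq_trans (size_add _ _)) // geq_max c1 (leq_trans hY).
  - by rewrite coefD c2 nth_default // addr0.
  - move=> j k hk.
    under eq_fun do rewrite lfunD mulrDl.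
    rewrite (@cintD (mu j) w (fun z => lfun t0 (nsum n) c z * hpow t0 ((n j)%:Z - 2 * k%:Z) z)
                   (fun z => lfun t0 (nsum n) Y z * hpow t0 ((n j)%:Z - 2 * k%:Z) z)) //;
      try exact: cnice_lfun.
    by rewrite c3 // hc // addr0.
by move/eqP; rewrite -subr_eq0 opprD addrA subrr sub0r oppr_eq0 => /eqP.
Qed.
Lemma transfer (mu : {measure set R -> \bar R}) w (F G : R[i] -> R[i]) :
  (forall t, F (expi t) = (w t)%:C * G (expi t)) ->
  cint mu (fun _ => 1) F = cint mu w G.
Proof.
move=> h; rewrite /cint; congr (_ +i* _); congr Rintegral; apply: funext => t;
  rewrite h; case: (G (expi t)) => a b /=; rewrite mul1r ?mul0r ?subr0 ?addr0 //.
Qed.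
Lemma circle_poly_eq0 (p : {poly R[i]}) : (forall t, p.[expi t] = 0) -> p = 0.
Proof.
move=> h; set M := size p.
have Kp : 0 < (M.+1)%:R :> R by rewrite ltr0n.
pose del := 2 * pi / (M.+1)%:R : R.
have delp : 0 < del by rewrite divr_gt0 // pi2_gt0.
pose f i := expi (t0 + i%:R * del) : R[i].
apply: (@roots_geq_poly_eq0 _ p [seq f i | i <- iota 0 M]).
- by apply/allP => z /mapP [i _ ->]; rewrite /root h.
- rewrite map_inj_in_uniq ?iota_uniq // => i j hi hj /angle_uniq.
  have itv : forall k, k \in iota 0 M -> t0 <= t0 + k%:R * del < t0 + 2 * pi.
    move=> k; rewrite mem_iota add0n => /andP[_ hk]; apply/andP; split.
      by rewrite lerDl mulr_ge0 // ltW.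
    rewrite ltrD2l /del mulrCA gtr_pMr ?pi2_gt0 // ltr_pdivrMr // mul1r ltr_nat.
    by rewrite (leq_trans hk).
  move=> /(_ (itv _ hi) (itv _ hj)) /addrI /mulIf.
  by move=> /(_ (lt0r_neq0 delp)) /eqP; rewrite eqr_nat => /eqP.
- by rewrite size_map size_iota.
Qed.
Lemma conjcM (a b : R[i]) : conjc (a * b) = conjc a * conjc b.
Proof. exact: rmorphM. Qed.
Lemma Ek_neq0 t k : Ek t k != 0.
Proof.
apply/negP => /eqP h; have := EkD t k (- k); rewrite h mul0r subrr Ek0 => /eqP.
by rewrite eq_sym oner_eq0.
Qed.
Lemma Ek_cancel t k (a b : R[i]) : Ek t k * a = Ek t k * b -> a = b.
Proof. by apply: mulfI; exact: Ek_neq0. Qed.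
Lemma expi_neq0 t : expi t != 0 :> R[i].
Proof.
apply/negP => /eqP h; have := normc_expi t; rewrite h.
by rewrite /Normc.normc /= expr0n addr0 sqrtr0 => /eqP; rewrite eq_sym oner_eq0.
Qed.
Lemma conj_expiV t : (conjc (expi t))^-1 = expi t :> R[i].
Proof.
have h : conjc (expi t) * expi t = 1 by rewrite conj_expi expiD addNr expi0.
have hn : conjc (expi t) != 0 :> R[i].
  by apply/negP => /eqP h0; move: h; rewrite h0 mul0r => /eqP; rewrite eq_sym oner_eq0.
by rewrite -[RHS](mulKf hn) h mulr1.
Qed.
Lemma sym N (d : {poly R[i]}) tau : (size d <= N.+2)%N ->
  (forall z, z != 0 -> lfun t0 N.+1 d z = tau * conjc (lfun t0 N.+1 d ((conjc z)^-1))) ->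
  d = \poly_(i < N.+2) (tau * conjc (d`_(N.+1 - i)%N)).
Proof.
move=> hs hinv; set dr := \poly_(i < N.+2) _.
have hsr : (size dr <= N.+2)%N by exact: size_poly.
suff : d - dr = 0 by move/eqP; rewrite subr_eq0 => /eqP.
apply: circle_poly_eq0 => t; rewrite hornerD hornerN; apply/eqP; rewrite subr_eq0; apply/eqP.
apply: (@Ek_cancel t (- (N.+1)%:Z)); rewrite -!lfun_circ //.
rewrite hinv ?expi_neq0 // conj_expiV.
rewrite /lfun rmorph_sum mulr_sumr /=.
rewrite [RHS](reindex_inj rev_ord_inj); apply: eq_bigr => i _ /=.
rewrite coef_poly /=.
have hi := ltn_ord i.
rewrite (_ : (N.+2 - i.+1 < N.+2)%N = true); last by lia.
rewrite (_ : (N.+1 - (N.+2 - i.+1))%N = i); last by lia.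
rewrite !hpow_circ conjcM Ek_conj mulrA; congr (_ * Ek t _).
lia.
Qed.
Lemma mulconj (x : R[i]) :
  x * conjc x = ((complex.Re x)^+2 + (complex.Im x)^+2)%:C.
Proof.
case: x => a b; rewrite /conjc /=; apply/eqP; rewrite eq_complex /=.
by apply/andP; split; apply/eqP; ring.
Qed.
Lemma normc_sqr (x : R[i]) :
  Normc.normc x ^+ 2 = (complex.Re x)^+2 + (complex.Im x)^+2.
Proof. by case: x => a b /=; rewrite sqr_sqrtr // addr_ge0 // sqr_ge0. Qed.
Lemma rnice_cos : rnice (@cos R).
Proof.
split; first exact: continuous_measurable_fun (@continuous_cos R).
by exists 1; exact: cos_max.
Qed.
Lemma rnice_sin : rnice (@sin R).
Proof.
split; first exact: continuous_measurable_fun (@continuous_sin R).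
by exists 1; exact: sin_max.
Qed.
Lemma rnice_w (z0 : R[i]) : rnice (fun t => Normc.normc (expi t - z0) ^+ 2).
Proof.
under eq_fun do rewrite normc_sqr.
case: z0 => a b /=.
have h : forall f : R -> R, rnice f -> rnice (fun t => (f t + - a) ^+ 2).
  move=> f hf; under eq_fun do rewrite expr2.
  by apply: rnice_mul; apply: rnice_add => //; exact: rnice_cst.
apply: rnice_add.
  exact: (h _ rnice_cos).
have h2 : rnice (fun t => (sin t + - b) ^+ 2).
  under eq_fun do rewrite expr2.
  by apply: rnice_mul; apply: rnice_add => //; try exact: rnice_sin; exact: rnice_cst.
exact: h2.
Qed.
Lemma step_size r (mu : 'I_r -> {measure set R -> \bar R}) n tau (d : {poly R[i]}) :
  (forall j, (mu j setT < +oo)%E) ->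
  phi_normal t0 mu (fun _ => 1) n ->
  paraorthogonal t0 mu n tau d ->
  ~ (forall z : R[i], z != 0 -> lfun t0 (nsum n).+1 d z = 0) ->
  size d = (nsum n).+2.
Proof.
move=> fin hphi; rewrite /paraorthogonal /=; set N := nsum n.
move=> [hs hinv hcond] hX.
have hd := @sym N d tau hs hinv.
case: (ltngtP (size d) N.+2) => // hlt; last by move: hs; rewrite leqNgt hlt.
exfalso; apply: hX => z _.
have dN : d`_N.+1 = 0 by rewrite nth_default.
have d0 : d`_0 = 0.
  by rewrite {1}hd coef_poly /= subn0 dN (_ : conjc (0 : R[i]) = 0) ?mulr0 // rmorph0.
set Y := \poly_(i < N) d`_i.+1.
have hY : (size Y <= N)%N by exact: size_poly.
have dY : d = Y * 'X.
  apply/polyP => i; rewrite coefMX; case: i => [|i] //=.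
  rewrite coef_poly; case: ifP => // /negbT; rewrite -leqNgt => hi.
  by rewrite nth_default //; apply: (leq_trans (n := N.+1)); [rewrite -ltnS | rewrite ltnS].
have Y0 : Y = 0.
  apply: (@kernel r mu (fun=> 1) n fin (rnice_cst 1) hphi Y hY) => j k hk.
  rewrite -(hcond j k hk); symmetry; apply: transfer => t.
  rewrite (_ : ((1 : R)%:C : R[i]) = 1) // mul1r !lfun_circ //; last exact: (leq_trans hY).
  rewrite !hpow_circ {1}dY hornerMX.
  set y := Y.[expi t]; rewrite -Ek2.
  rewrite [LHS](_ : _ = y * (Ek t (- (N.+1)%:Z) * Ek t 2 * Ek t ((n j)%:Z - 1 - 2 * k%:Z))); last by ring.
  rewrite [RHS](_ : _ = y * (Ek t (- N%:Z) * Ek t ((n j)%:Z - 2 * k%:Z))); last by ring.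
  by rewrite !EkD; congr (_ * Ek t _); lia.
rewrite dY Y0 mul0r /lfun big1 // => i _; by rewrite coef0 mul0r.
Qed.
Lemma conjcX (a : R[i]) k : conjc (a ^+ k) = (conjc a) ^+ k.
Proof. exact: rmorphXn. Qed.
Lemma conjcB (a b : R[i]) : conjc (a - b) = conjc a - conjc b.
Proof. exact: rmorphB. Qed.
Lemma conjc0' : conjc (0 : R[i]) = 0.
Proof. exact: rmorph0. Qed.
Lemma step_root r (mu : 'I_r -> {measure set R -> \bar R}) n tau (d : {poly R[i]}) :
  (forall j, (mu j setT < +oo)%E) ->
  `|tau| = 1 ->
  paraorthogonal t0 mu n tau d ->
  size d = (nsum n).+2 ->
  (forall z0 : R[i], z0 != 0 -> `|z0| != 1 ->
     phi_normal t0 mu (fun t => (Normc.normc (expi t - z0)) ^+ 2) n) ->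
  forall z0 : R[i], root d z0 -> `|z0| = 1.
Proof.
move=> fin htau; rewrite /paraorthogonal /=; set N := nsum n.
move=> [hs hinv hcond] hsz hphiw z0 hroot.
apply/eqP; apply: contraT => hz0n.
have hd := @sym N d tau hs hinv.
have dnz : d != 0 by rewrite -size_poly_eq0 hsz.
have lc : d`_N.+1 != 0.
  by move: dnz; rewrite -lead_coef_eq0 lead_coefE hsz.
have taunz : tau != 0.
  by apply/negP => /eqP h; move: htau; rewrite h normr0 => /eqP; rewrite eq_sym oner_eq0.
have z0nz : z0 != 0.
  apply/negP => /eqP h; move: hroot; rewrite h /root horner_coef0 {1}hd coef_poly /= subn0.
  by rewrite mulf_eq0 (negbTE taunz) /= conjc_eq0 (negbTE lc).
have cz0nz : conjc z0 != 0 by rewrite conjc_eq0.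
set z1 := (conjc z0)^-1.
have hz1z0 : z1 * conjc z0 = 1 by rewrite mulVf.
have z1nz : z1 != 0 by rewrite invr_eq0.
have z1ne : z1 != z0.
  apply/negP => /eqP h; move/negP: hz0n; apply; apply/eqP.
  move: hz1z0; rewrite h mulconj normc_def => h1.
  have h2 : (complex.Re z0) ^+ 2 + (complex.Im z0) ^+ 2 = 1 by case: h1.
  by rewrite h2 sqrtr1.
have root1 : root d z1.
  have e : (\poly_(i < N.+2) (tau * conjc (d`_(N.+1 - i)%N))).[z1] =
      tau * z1 ^+ N.+1 * conjc (d.[z0]).
    rewrite (horner_coef_wide z1 (size_poly _ _)) (horner_coef_wide z0 hs).
    rewrite rmorph_sum mulr_sumr (reindex_inj rev_ord_inj); apply: eq_bigr => i _ /=.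
    have hi := ltn_ord i.
    rewrite coef_poly /= (_ : (N.+2 - i.+1 < N.+2)%N = true); last by lia.
    rewrite (_ : (N.+1 - (N.+2 - i.+1))%N = i); last by lia.
    rewrite conjcM conjcX.
    rewrite (_ : z1 ^+ N.+1 = z1 ^+ (N.+2 - i.+1) * z1 ^+ i); last first.
      by rewrite -exprD; congr (_ ^+ _); lia.
    rewrite [RHS](_ : _ = tau * conjc d`_i * z1 ^+ (N.+2 - i.+1) * (z1 * conjc z0) ^+ i).
      by rewrite hz1z0 expr1n mulr1.
    by rewrite exprMn; ring.
  by rewrite /root {1}hd e (eqP hroot) conjc0' mulr0.
have [q0 hq0] : exists q0, d = q0 * ('X - z0%:P) by apply/factor_theorem.
have rq0 : root q0 z1.
  move: root1; rewrite /root {1}hq0 hornerM hornerXsubC mulf_eq0 => /orP [] //.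
  by rewrite subr_eq0 (negbTE z1ne).
have [q hq] : exists q, q0 = q * ('X - z1%:P) by apply/factor_theorem.
have dq : d = q * ('X - z1%:P) * ('X - z0%:P) by rewrite hq0 hq.
have qnz : q != 0 by apply/negP => /eqP h; move: dnz; rewrite dq h !mul0r eqxx.
have sq : size q = N.
  move: hsz; rewrite dq size_Mmonic ?monicXsubC //; last first.
    by rewrite mulf_neq0 // polyXsubC_eq0.
  rewrite size_Mmonic ?monicXsubC // !size_XsubC (_ : (2%:R : nat) = 2%N) // !addn2 /= => /eqP; rewrite !eqSS => /eqP //.
set Y := (- z1) *: q.
have hY : (size Y <= N)%N by rewrite -sq size_scale_leq.
have Y0 : Y = 0.
  apply: (@kernel r mu _ n fin (rnice_w z0) (hphiw z0 z0nz hz0n) Y hY) => j k hk.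
  rewrite -(hcond j k hk); symmetry; apply: transfer => t.
  rewrite !lfun_circ //; last exact: (leq_trans hY).
  rewrite !hpow_circ hornerZ {1}dq !hornerM !hornerXsubC.
  set e := expi t.
  have ece : e * conjc e = 1 by rewrite /e conj_expi expiD subrr expi0.
  have key : (e - z1) * (e - z0) = - z1 * e * (Normc.normc (e - z0) ^+ 2)%:C.
    rewrite normc_sqr -mulconj conjcB.
    have -> : - z1 * e * ((e - z0) * (conjc e - conjc z0)) =
      (e - z0) * (- z1 * (e * conjc e) + e * (z1 * conjc z0)) by ring.
    by rewrite ece hz1z0; ring.
  rewrite -[q.[e] * _ * _]mulrA key.
  set W := (Normc.normc (e - z0) ^+ 2)%:C; set y := q.[e].
  rewrite /e -Ek2.
  rewrite [LHS](_ : _ = y * W * (- z1) * (Ek t (- (N.+1)%:Z) * Ek t 2 * Ek t ((n j)%:Z - 1 - 2 * k%:Z))); last by ring.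
  rewrite [RHS](_ : _ = y * W * (- z1) * (Ek t (- N%:Z) * Ek t ((n j)%:Z - 2 * k%:Z))); last by ring.
  by rewrite !EkD; congr (_ * Ek t _); lia.
by move: Y0 => /eqP; rewrite scaler_eq0 oppr_eq0 (negbTE z1nz) (negbTE qnz).
Qed.
End S.

Theorem theorem4p1 (R : realType) (t0 : R) (r : nat)
    (mu : 'I_r -> {measure set R -> \bar R}) (n : 'I_r -> nat)
    (tau : R[i]) (d : {poly R[i]}) :
  (* mu_j : finite positive Borel measures on the circle, written in the
     angle variable theta in [t0, t0 + 2 pi), z = e^{i theta} *)
  (forall j, (mu j setT < +oo)%E) ->
  (forall j, mu j (~` `[t0, t0 + 2 * pi[) = 0%E) ->
  (forall j, infinite_set (msupport (mu j))) ->
  (* n is phi-normal for mu *)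
  phi_normal t0 mu (fun _ => 1) n ->
  `|tau| = 1 ->
  (* X = lfun t0 (|n|+1) d is a tau-invariant paraorthogonal function, X <> 0 *)
  paraorthogonal t0 mu n tau d ->
  ~ (forall z : R[i], z != 0 -> lfun t0 (nsum n).+1 d z = 0) ->
  (* n is phi-normal for (|z - z0|^2 d mu_j)_j whenever z0 <> 0, |z0| <> 1 *)
  (forall z0 : R[i], z0 != 0 -> `|z0| != 1 ->
     phi_normal t0 mu (fun t => (Normc.normc (expi t - z0)) ^+ 2) n) ->
  (* z^{(|n|+1)/2} X(z) = sum_j d_j z^j has degree |n|+1, all zeros on the circle *)
  size d = (nsum n).+2 /\ (forall z : R[i], root d z -> `|z| = 1).
Proof.
move=> fin _ _ hphi htau hpara hX hphiw.
have hs := @step_size R t0 r mu n tau d fin hphi hpara hX.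
split => //.
exact: (@step_root R t0 r mu n tau d fin htau hpara hs hphiw).
Qed.
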